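(* For every $k\in\mathbb{N}$ and every $i,j\in\{0,1,\dots,2^k-1\}$, $\mathrm{lcis}(\alpha_k^0\cdots\alpha_k^i,\ \beta_k^0\cdots\beta_k^j)=i+j+2^k$.
   Context: $\mathrm{lcis}(X,Y)$ denotes the length of the longest strictly increasing common subsequence of integer sequences $X,Y$. For $A=\langle a_0,\dots,a_{n-1}\rangle$, $\mathrm{inflate}(A)=\langle 2a_0-1,2a_0,\dots,2a_{n-1}-1,2a_{n-1}\rangle$; $\circ$ and juxtaposition denote concatenation. Separator sequences: for each $k\in\mathbb{N}$, $A_k=\alpha_k^0\cdots\alpha_k^{2^k-1}$ and $B_k=\beta_k^0\cdots\beta_k^{2^k-1}$ are concatenations of $2^k$ blocks, defined inductively. $A_0=B_0=\langle 1\rangle$ (a single block). Let $s_k$ be the largest element of $A_k$ and $B_k$ (one has $s_k=2^{k+2}-3$). For $i\in\{0,\dots,2^k-1\}$: $\alpha_{k+1}^{2i}=\mathrm{inflate}(\alpha_k^i)\circ\langle 2s_k+2\rangle$, $\alpha_{k+1}^{2i+1}=\langle 2s_k+1,2s_k+3\rangle$, $\beta_{k+1}^{2i}=\mathrm{inflate}(\beta_k^i)\circ\langle 2s_k+1\rangle$, $\beta_{k+1}^{2i+1}=\langle 2s_k+2,2s_k+3\rangle$. *)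

(* Defs.v *)
From mathcomp Require Import all_boot.
Set Implicit Arguments. Unset Strict Implicit. Unset Printing Implicit Defensive.

(* All sequences here consist of positive integers; we use nat. *)

Fixpoint subseqs (s : seq nat) : seq (seq nat) :=
  match s with
  | [::] => [:: [::]]
  | x :: s' => let r := subseqs s' in map (cons x) r ++ r
  end.

Definition lcis (X Y : seq nat) : nat :=
  \max_(s <- subseqs X | subseq s Y && sorted ltn s) size s.

Definition inflate (A : seq nat) : seq nat :=
  flatten [seq [:: (2 * a).-1; 2 * a] | a <- A].

(* seps k = (blocks of A_k, blocks of B_k), each a list of 2^k blocks. *)
Fixpoint seps (k : nat) : seq (seq nat) * seq (seq nat) :=
  match k with
  | 0 => ([:: [:: 1]], [:: [:: 1]])
  | k'.+1 =>
      let (As, Bs) := seps k' in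
      let s := foldr maxn 0 (flatten As ++ flatten Bs) in
      (flatten [seq [:: inflate a ++ [:: 2 * s + 2]; [:: 2 * s + 1; 2 * s + 3]] | a <- As],
       flatten [seq [:: inflate b ++ [:: 2 * s + 1]; [:: 2 * s + 2; 2 * s + 3]] | b <- Bs])
  end.

Definition alpha (k i : nat) : seq nat := nth [::] (seps k).1 i.
Definition beta (k j : nat) : seq nat := nth [::] (seps k).2 j.

Definition alpha_prefix (k i : nat) : seq nat := flatten [seq alpha k t | t <- iota 0 i.+1].
Definition beta_prefix (k j : nat) : seq nat := flatten [seq beta k t | t <- iota 0 j.+1].

(* Main.v *)
Require Import Defs.
From mathcomp Require Import all_boot.
From mathcomp Require Import zify.
Set Implicit Arguments. Unset Strict Implicit. Unset Printing Implicit Defensive.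


Lemma subseqs_mem s X : (s \in subseqs X) = subseq s X.
Proof.
elim: X s => [|x X IH] s /=.
  by case: s.
rewrite mem_cat; case: s => [|y s].
  by rewrite IH sub0seq orbT.
rewrite /= IH; case: eqP => [->|ne].
  rewrite mem_map; last by move=> a b [].
  rewrite IH; apply/idP/idP; [case/orP => // H; exact: cons_subseq H | by move->].
rewrite orbC; apply/idP/idP => [/orP [//|/mapP [t _ [E _]]] | ->] //.
Qed.

Definition ci (V A B : seq nat) := [&& subseq V A, subseq V B & pairwise ltn V].

Lemma lcis_ge V A B : ci V A B -> size V <= lcis A B.
Proof.
case/and3P => HA HB HV; rewrite /lcis.
apply: (leq_bigmax_seq V); first by rewrite subseqs_mem.
by rewrite HB /= sorted_pairwise //; exact: ltn_trans.
Qed.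

Lemma lcis_le A B n : (forall V, ci V A B -> size V <= n) -> lcis A B <= n.
Proof.
move=> H; apply/bigmax_leqP_seq => V; rewrite subseqs_mem => HA /andP [HB HV].
by apply: H; rewrite /ci HA HB -sorted_pairwise //; exact: ltn_trans.
Qed.

Lemma bigmax_wit (T : eqType) (r : seq T) (P : pred T) (F : T -> nat) :
  has P r -> exists2 x, x \in r & P x && (F x == \max_(y <- r | P y) F y).
Proof.
elim: r => [|a r IH] //= Hh; rewrite big_cons.
case Pa: (P a) => /=.
  case Hr: (has P r).
    case: (IH Hr) => x xr /andP [Px /eqP Fx].
    case: (leqP (F a) (\max_(y <- r | P y) F y)) => h.
      by exists x; rewrite ?inE ?xr ?orbT // Px Fx eqxx.
    by exists a; rewrite ?inE ?eqxx // Pa.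
  exists a; rewrite ?inE ?eqxx // Pa /= eq_sym; apply/eqP/maxn_idPl.
  apply/bigmax_leqP_seq => y yr Py.
  by move/hasP: Hr; case; exists y.
move: Hh; rewrite Pa /= => Hr; case: (IH Hr) => x xr Hx.
by exists x; rewrite // inE xr orbT.
Qed.

Lemma lcis_wit A B : exists2 V, ci V A B & size V = lcis A B.
Proof.
have [|V] := @bigmax_wit _ (subseqs A) (fun s : seq nat => subseq s B && sorted ltn s) size.
  by apply/hasP; exists [::]; rewrite ?subseqs_mem ?sub0seq.
rewrite subseqs_mem => HA /andP [/andP [HB HV] /eqP E].
by exists V => //; rewrite /ci HA HB -sorted_pairwise //; exact: ltn_trans.
Qed.

Lemma lcis_eq A B n : (forall V, ci V A B -> size V <= n) -> (exists2 V, ci V A B & n <= size V) -> lcis A B = n.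
Proof.
move=> H1 [V HV H2]; apply/eqP; rewrite eqn_leq lcis_le //=.
exact: leq_trans H2 (lcis_ge HV).
Qed.

Lemma subseq_split (W s1 s2 : seq nat) : subseq W (s1 ++ s2) ->
  exists W1 W2, [/\ W = W1 ++ W2, subseq W1 s1 & subseq W2 s2].
Proof.
case/subseqP => m Hm ->.
exists (mask (take (size s1) m) s1), (mask (drop (size s1) m) s2).
rewrite -mask_cat; last by rewrite size_takel // Hm size_cat leq_addr.
rewrite cat_take_drop; split => //; apply/subseqP.
  by exists (take (size s1) m) => //; rewrite size_takel // Hm size_cat leq_addr.
by exists (drop (size s1) m) => //; rewrite size_drop Hm size_cat addKn.
Qed.


Arguments inflate : simpl never.

Lemma inflate_cons a l : inflate (a :: l) = (2 * a).-1 :: 2 * a :: inflate l.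
Proof. by []. Qed.

Lemma inflate_cat l1 l2 : inflate (l1 ++ l2) = inflate l1 ++ inflate l2.
Proof. by rewrite /inflate map_cat flatten_cat. Qed.

Lemma size_inflate l : size (inflate l) = 2 * size l.
Proof. elim: l => [|a l IH] //; rewrite inflate_cons /= IH; lia. Qed.

Lemma inflate_flatten L : inflate (flatten L) = flatten (map inflate L).
Proof. by elim: L => [|l L IH] //=; rewrite inflate_cat IH. Qed.

Lemma mem_inflate x l : x \in inflate l -> exists2 a, a \in l & (x = (2 * a).-1) \/ (x = 2 * a).
Proof.
elim: l => [|a l IH] //; rewrite inflate_cons !inE => /orP [/eqP ->|/orP [/eqP ->|/IH [b bl H]]].
- by exists a; rewrite ?inE ?eqxx //; left.
- by exists a; rewrite ?inE ?eqxx //; right.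
- by exists b; rewrite // inE bl orbT.
Qed.

Lemma subseq_inflate W P : subseq W P -> subseq (inflate W) (inflate P).
Proof.
elim: P W => [|p P IH] W; first by case: W.
case: W => [|w W]; first by rewrite sub0seq.
move=> H0; have : subseq (if w == p then W else w :: W) P := H0.
clear H0; case: eqP => [->|_] H.
  rewrite !inflate_cons.
  change (subseq ([:: (2*p).-1; 2*p] ++ inflate W) ([:: (2*p).-1; 2*p] ++ inflate P)).
  exact: (cat_subseq (subseq_refl _) (IH _ H)).
apply: (@subseq_trans _ (inflate P)); first exact: IH.
rewrite inflate_cons.
exact: (suffix_subseq [:: (2*p).-1; 2*p] (inflate P)).
Qed.

Lemma pairwise_inflate W : all (fun x => 0 < x) W -> pairwise ltn W -> pairwise ltn (inflate W).
Proof.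
elim: W => [|w W IH] // /andP [w0 Wp] /andP [Hw HW].
rewrite inflate_cons /= IH // andbT.
have H : all (ltn (2 * w)) (inflate W).
  apply/allP => x /mem_inflate [b bW Hx].
  have := allP Hw b bW; rewrite /=; case: Hx => ->; lia.
rewrite H andbT; apply/andP; split; first lia.
by apply/allP => x /(allP H) /=; lia.
Qed.

Definition defl (W : seq nat) := undup (map uphalf W).

Lemma uphalf_mono m n : m <= n -> uphalf m <= uphalf n.
Proof. by move=> h; rewrite !uphalfE half_leq. Qed.

Lemma uphalfSS n : uphalf n.+2 = (uphalf n).+1.
Proof. by []. Qed.

Lemma defl_pairwise W : pairwise ltn W -> pairwise ltn (defl W).
Proof.
rewrite /defl; elim: W => [|w W IH] //= /andP [Hw HW].
case: ifP => Hin; first exact: IH.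
rewrite /= IH // andbT; apply/allP => y; rewrite mem_undup => Hy.
have ne : y != uphalf w by apply: contraFN Hin => /eqP <-.
case/mapP: Hy ne => w' w'W -> ne.
have := allP Hw w' w'W; rewrite /= => h.
by rewrite ltn_neqAle eq_sym ne uphalf_mono // ltnW.
Qed.

Lemma uphalf_gt w x : w.+1 < x -> uphalf w < uphalf x.
Proof.
move=> h; have : uphalf w.+2 <= uphalf x by apply: uphalf_mono.
by rewrite uphalfSS.
Qed.

Lemma defl_size W : pairwise ltn W -> size W <= 2 * size (defl W).
Proof.
rewrite /defl; move: {2}(size W) (leqnn (size W)) => n.
elim: n W => [|n IH] [|w W] //= Hs /andP [Hw HW].
case: ifP => Hin; last first.
  have := IH W Hs HW; rewrite /=; lia.
case: W Hs Hw HW Hin => [|w' W] //= Hs /andP [ww' Hw] /andP [Hw' HW] Hin.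
have Hn : forall x, x \in W -> uphalf w < uphalf x.
  by move=> x xW; apply: uphalf_gt; have := allP Hw' x xW; rewrite /=; lia.
have e : uphalf w' = uphalf w.
  move: Hin; rewrite inE => /orP [/eqP -> //|/mapP [x xW ex]].
  have := Hn x xW; rewrite -ex => h.
  have := uphalf_mono (ltnW (allP Hw' x xW)); rewrite /=.
  have := uphalf_mono (ltnW ww'); lia.
have Hn' : (uphalf w' \in map uphalf W) = false.
  by apply/negbTE/negP => /mapP [x xW ex]; have := Hn x xW; rewrite -ex e ltnn.
rewrite Hn' /=; have := IH W _ HW; rewrite /=.
have Hs' : size W <= n by lia.
move=> h; have := h Hs'; lia.
Qed.

Lemma undup_nseq (a : nat) l r : all (pred1 a) l -> subseq (undup (l ++ r)) (a :: undup r).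
Proof.
elim: l => [|x l IH] /=; first by move=> _; apply: subseq_cons.
case/andP => /eqP -> Hl; case: ifP => Hin; first exact: IH.
case: l Hl IH Hin => [|y l] //= Hl IH Hin.
  by rewrite eqxx subseq_refl.
by move: Hl Hin => /andP [/eqP -> _]; rewrite inE eqxx.
Qed.

Lemma uphalf_inf a : uphalf ((2 * a).-1) = a /\ uphalf (2 * a) = a.
Proof.
split; last by rewrite mul2n uphalf_double.
case: a => [|b] //; rewrite mulnS /= mul2n /= half_double //.
Qed.

Lemma defl_subseq W A : pairwise ltn W -> subseq W (inflate A) -> subseq (defl W) A.
Proof.
elim: A W => [|a A IH] W HW.
  by case: W HW.
rewrite inflate_cons => H.
have : subseq W ([:: (2 * a).-1; 2 * a] ++ inflate A) by [].
case/subseq_split => W1 [W2 [E H1 H2]].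
move: HW; rewrite E pairwise_cat => /and3P [_ _ HW2].
have IH2 := IH _ HW2 H2.
rewrite /defl map_cat.
apply: (@subseq_trans _ (a :: undup (map uphalf W2))).
  apply: undup_nseq; apply/allP => y /mapP [x xW1 ->] /=.
  have := mem_subseq H1 xW1; rewrite !inE => /orP [/eqP ->|/eqP ->];
    have [h1 h2] := uphalf_inf a; by rewrite ?h1 ?h2.
by rewrite /= eqxx.
Qed.

Lemma inflate_bound Z A B : pairwise ltn Z -> subseq Z (inflate A) -> subseq Z (inflate B) ->
  size Z <= 2 * lcis A B.
Proof.
move=> HZ HA HB; apply: leq_trans (defl_size HZ) _.
rewrite leq_mul2l /=; apply: lcis_ge.
by rewrite /ci !defl_subseq // defl_pairwise.
Qed.


Definition small (c : nat) := fun x : nat => x <= c.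
Definition big (c : nat) := fun x : nat => c < x.

Lemma cat_split2 (c : nat) Zs Zb W1 W2 : all (small c) W1 -> all (big c) Zb -> Zs ++ Zb = W1 ++ W2 ->
  exists C, Zs = W1 ++ C /\ W2 = C ++ Zb.
Proof.
elim: W1 Zs => [|w W1 IH] Zs /=; first by move=> _ _ <-; exists Zs.
case/andP => Hw HW1 HZb; case: Zs => [|z Zs] /=.
  clear IH; case: Zb HZb => [|b Zb] //= /andP [Hb _] [E _].
  by move: Hw Hb; rewrite /small /big E; lia.
case=> -> /(IH Zs HW1 HZb) [C [-> ->]]; by exists C.
Qed.

Lemma skip_big (c : nat) S X x r : all (big c) S -> small c x -> subseq (x :: r) (S ++ X) -> subseq (x :: r) X.
Proof.
elim: S => [|y S IH] //= /andP [Hy HS] Hx H.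
apply: IH => //; move: H => /=.
have -> : (x == y) = false by apply/negbTE/eqP => E; move: Hy Hx; rewrite /small /big E; lia.
done.
Qed.

Lemma filter_small (c : nat) l : all (small c) l -> filter (big c) l = [::].
Proof.
elim: l => [|x l IH] //= /andP [Hx Hl]; rewrite IH //.
by move: Hx; rewrite /small /big; case: ltnP.
Qed.

Definition Xs (gs : seq (seq nat)) (g S E : seq nat) :=
  flatten (map (fun h => h ++ S) gs) ++ g ++ E.

Lemma filter_Xs (c : nat) gs g S E : all (all (small c)) gs -> all (small c) g -> all (big c) S -> all (big c) E ->
  filter (big c) (Xs gs g S E) = flatten (nseq (size gs) S) ++ E.
Proof.
move=> Hgs Hg HS HE; rewrite /Xs; elim: gs Hgs => [|h gs IH] /=.
  by move=> _; rewrite filter_cat filter_small // (all_filterP HE).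
case/andP => Hh Hgs; rewrite -catA !filter_cat filter_small // (all_filterP HS).
by rewrite /= -!filter_cat IH // catA.
Qed.

Lemma structG (c : nat) gs g S E Zs Zb :
  all (all (small c)) gs -> all (small c) g -> all (big c) S -> all (big c) E ->
  all (small c) Zs -> all (big c) Zb -> subseq (Zs ++ Zb) (Xs gs g S E) ->
  exists t, [/\ t <= size gs, subseq Zs (flatten (take t.+1 (rcons gs g)))
     & subseq Zb (flatten (nseq (size gs - t) S) ++ E)].
Proof.
move=> + Hg HS HE + HZb; elim: gs Zs => [|h gs IH] Zs /=.
  move=> _ HZs; rewrite /Xs /= => /subseq_split [W1 [W2 [E1 H1 H2]]].
  have HW1 : all (small c) W1 by apply/allP => x /(mem_subseq H1) /(allP Hg).
  have [C [E2 E3]] := cat_split2 HW1 HZb E1.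
  case: C E2 E3 => [|x C] E2 E3.
    exists 0; rewrite cats0 in E2; rewrite E2 cats0; split => //.
    by move: H2; rewrite E3.
  have : x \in Zs by rewrite E2 mem_cat inE eqxx orbT.
  move/(allP HZs) => Hx.
  have : x \in W2 by rewrite E3 inE eqxx.
  move/(mem_subseq H2)/(allP HE); move: Hx; rewrite /small /big; lia.
case/andP => Hh Hgs HZs.
have -> : Xs (h :: gs) g S E = h ++ (S ++ Xs gs g S E) by rewrite /Xs /= !catA.
case/subseq_split => W1 [W2 [E1 H1 H2]].
have HW1 : all (small c) W1 by apply/allP => x xW1; exact: (allP Hh x (mem_subseq H1 xW1)).
have [C [E2 E3]] := cat_split2 HW1 HZb E1.
case: C E2 E3 => [|x C] E2 E3.
  exists 0; rewrite cats0 in E2; rewrite E2 /= take0 cats0; split => //.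
  apply: (@subseq_trans _ (filter (big c) (S ++ Xs gs g S E))).
    by rewrite subseq_filter HZb; move: H2; rewrite E3.
  by rewrite filter_cat (all_filterP HS) filter_Xs // catA.
have HC : all (small c) (x :: C) by move: HZs; rewrite E2 all_cat => /andP [].
have Hx : small c x by case/andP: HC.
rewrite E3 /= in H2; have H3 := skip_big HS Hx H2.
have [t [Ht HZ1 HZ2]] := IH (x :: C) Hgs HC H3.
exists t.+1; split => //.
  by rewrite E2 /=; apply: cat_subseq.
Qed.



Lemma le_foldr_max x l : x \in l -> x <= foldr maxn 0 l.
Proof.
elim: l => [|y l IH] //=; rewrite inE => /orP [/eqP ->|/IH h]; first exact: leq_maxl.
by apply: leq_trans h (leq_maxr _ _).
Qed.

Lemma filter_big c l : all (big c) l -> filter (small c) l = [::].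
Proof.
elim: l => [|x l IH] //= /andP [Hx Hl]; rewrite IH //.
by move: Hx; rewrite /small /big; case: leqP.
Qed.

Lemma split_sorted c V : pairwise ltn V -> V = filter (small c) V ++ filter (big c) V.
Proof.
elim: V => [|v V IH] //= /andP [Hv HV].
case: (leqP v c) => h.
  have -> : small c v by [].
  have -> : big c v = false by rewrite /big; lia.
  by rewrite /= -IH.
have Hb : all (big c) V by apply/allP => x /(allP Hv) /=; rewrite /big; lia.
have -> : small c v = false by rewrite /small; lia.
have -> : big c v by [].
by rewrite filter_big // (all_filterP Hb).
Qed.

Lemma take_pairs (p : seq nat -> seq nat) (q : seq nat) (As : seq (seq nat)) i :
 i < size As ->
 flatten (take (2*i).+1 (flatten [seq [:: p a; q] | a <- As])) =
   flatten [seq p a ++ q | a <- take i As] ++ p (nth [::] As i) /\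
 flatten (take (2*i).+2 (flatten [seq [:: p a; q] | a <- As])) =
   flatten [seq p a ++ q | a <- take i As] ++ p (nth [::] As i) ++ q.
Proof.
elim: As i => [|a As IH] i //.
case: i => [|i] H.
  by rewrite muln0 /= take0 !cats0.
rewrite mulnS; have := IH i H; rewrite /= => -[H1 H2]; rewrite H1 H2 !catA; split => //.
Qed.

Lemma tail_bound s d1 d2 (e f : bool) Zb :
  pairwise ltn Zb ->
  subseq Zb (flatten (nseq d1 [:: 2*s+2; 2*s+1; 2*s+3]) ++ (if e then [:: 2*s+2; 2*s+1; 2*s+3] else [:: 2*s+2])) ->
  subseq Zb (flatten (nseq d2 [:: 2*s+1; 2*s+2; 2*s+3]) ++ (if f then [:: 2*s+1; 2*s+2; 2*s+3] else [:: 2*s+1])) ->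
  size Zb <= 2 * d1 + 2 * d2 + e + f.
Proof.
move=> HZ H1 H2.
have sz : forall d (S : seq nat), size (flatten (nseq d S)) = d * size S.
  by move=> d S; elim: d => [|d IH] //=; rewrite size_cat IH mulSn.
have mf : forall d (S : seq nat) x, x \in flatten (nseq d S) -> x \in S.
  by move=> d S x; elim: d => [|d IH] //=; rewrite mem_cat => /orP [//|/IH].
have b3 : size Zb <= 3.
  have -> : 3 = size (iota (2*s+1) 3) by rewrite size_iota.
  apply: uniq_leq_size; first by apply: pairwise_uniq HZ; exact: ltnn.
  have hS : forall x, x \in [:: 2*s+2; 2*s+1; 2*s+3] -> 2*s+1 <= x < 2*s+1+3.
    by move=> x; rewrite !inE => /or3P [] /eqP ->; lia.
  move=> x /(mem_subseq H1); rewrite mem_iota mem_cat => /orP [/mf/hS //|].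
  by case: (e) => /=; [exact: hS| rewrite inE => /eqP ->; lia].
have b1 := size_subseq H1; have b2 := size_subseq H2.
rewrite size_cat sz in b1; rewrite size_cat sz in b2.
case: d1 H1 b1 => [|d1] H1 b1; last by case: (e) b1; case: (f) b2 => /= b2 b1; lia.
case: d2 H2 b2 => [|d2] H2 b2; last by case: (e) b1; case: (f) b2 => /= b2 b1; lia.
case: e H1 b1; case: f H2 b2 => H2 b2 H1 b1; rewrite /= in b1 b2; try lia.
- have H1' : subseq Zb [:: 2*s+2; 2*s+1; 2*s+3] := H1.
  have := size_subseq_leqif H1'; case=> _; case: (leqP (size Zb) 2) => // h.
  have e3 : size Zb == 3 by lia.
  move=> E; move: e3; rewrite E => /eqP Z; move: HZ; rewrite Z /=; lia.
- have H1' : subseq Zb [:: 2*s+2] := H1.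
  have H2' : subseq Zb [:: 2*s+1] := H2.
  case: Zb HZ H1' H2' {H1 H2 b1 b2 b3} => [|x Zb] // _.
  move=> /mem_subseq h1 /mem_subseq h2.
  have := h1 x (mem_head _ _); have := h2 x (mem_head _ _); rewrite !inE => /eqP -> /eqP; lia.
Qed.


Definition nextA s (As : seq (seq nat)) := flatten [seq [:: inflate a ++ [:: 2 * s + 2]; [:: 2 * s + 1; 2 * s + 3]] | a <- As].
Definition nextB s (Bs : seq (seq nat)) := flatten [seq [:: inflate b ++ [:: 2 * s + 1]; [:: 2 * s + 2; 2 * s + 3]] | b <- Bs].

Lemma prefX s As i (e : bool) : i < size As ->
  flatten (take (e + 2*i).+1 (nextA s As)) =
  Xs (map inflate (take i As)) (inflate (nth [::] As i)) [:: 2*s+2; 2*s+1; 2*s+3]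
     (if e then [:: 2*s+2; 2*s+1; 2*s+3] else [:: 2*s+2]).
Proof.
move=> H; have [H1 H2] := take_pairs (fun a => inflate a ++ [:: 2*s+2]) [:: 2*s+1; 2*s+3] H.
rewrite /nextA /Xs -map_comp.
have Em : [seq (inflate a ++ [:: 2 * s + 2]) ++ [:: 2 * s + 1; 2 * s + 3] | a <- take i As] =
  [seq ((fun h => h ++ [:: 2*s+2; 2*s+1; 2*s+3]) \o inflate) a | a <- take i As].
  by apply: eq_map => a /=; rewrite -catA.
case: e; [rewrite add1n H2 | rewrite add0n H1]; rewrite Em -?catA //.
Qed.

Lemma prefY s Bs j (e : bool) : j < size Bs ->
  flatten (take (e + 2*j).+1 (nextB s Bs)) =
  Xs (map inflate (take j Bs)) (inflate (nth [::] Bs j)) [:: 2*s+1; 2*s+2; 2*s+3]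
     (if e then [:: 2*s+1; 2*s+2; 2*s+3] else [:: 2*s+1]).
Proof.
move=> H; have [H1 H2] := take_pairs (fun a => inflate a ++ [:: 2*s+1]) [:: 2*s+2; 2*s+3] H.
rewrite /nextB /Xs -map_comp.
have Em : [seq (inflate a ++ [:: 2 * s + 1]) ++ [:: 2 * s + 2; 2 * s + 3] | a <- take j Bs] =
  [seq ((fun h => h ++ [:: 2*s+1; 2*s+2; 2*s+3]) \o inflate) a | a <- take j Bs].
  by apply: eq_map => a /=; rewrite -catA.
case: e; [rewrite add1n H2 | rewrite add0n H1]; rewrite Em -?catA //.
Qed.

Lemma infl_prefix (As : seq (seq nat)) t i : t <= i -> i < size As ->
  flatten (take t.+1 (rcons (map inflate (take i As)) (inflate (nth [::] As i)))) =
  inflate (flatten (take t.+1 As)).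
Proof.
move=> ht hi; rewrite -map_rcons -take_nth // -map_take take_takel //.
by rewrite inflate_flatten.
Qed.

Lemma sub_flat (gs : seq (seq nat)) g S :
  subseq (flatten gs ++ g) (flatten (map (fun h => h ++ S) gs) ++ g).
Proof.
elim: gs => [|h gs IH] /=; first exact: subseq_refl.
rewrite -!catA; apply: cat_subseq; first exact: subseq_refl.
apply: (@subseq_trans _ (flatten [seq h0 ++ S | h0 <- gs] ++ g)) => //; exact: suffix_subseq.
Qed.

Definition Tl s (e d : bool) : seq nat :=
  if e then (if d then [:: 2*s+1; 2*s+3] else [:: 2*s+1]) else (if d then [:: 2*s+2] else [::]).
Lemma Tl_props s (e d : bool) :
  [/\ subseq (Tl s e d) (if e then [:: 2*s+2; 2*s+1; 2*s+3] else [:: 2*s+2]),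
      subseq (Tl s e d) (if d then [:: 2*s+1; 2*s+2; 2*s+3] else [:: 2*s+1]),
      pairwise ltn (Tl s e d), all (fun y => 2*s < y) (Tl s e d) & size (Tl s e d) = e + d].
Proof.
have n12 : (2*s+1 == 2*s+2) = false by apply/eqP; lia.
have n21 : (2*s+2 == 2*s+1) = false by apply/eqP; lia.
have n32 : (2*s+3 == 2*s+2) = false by apply/eqP; lia.
have n31 : (2*s+3 == 2*s+1) = false by apply/eqP; lia.
case: e; case: d; rewrite /Tl /=; do 3! rewrite ?n12 ?n21 ?n32 ?n31 ?eqxx /=; split => //.
all: rewrite ?andbT; try (apply/andP; split); apply/ltP; lia.
Qed.

Lemma bgX s : all (big (2*s)) [:: 2*s+2; 2*s+1; 2*s+3].
Proof. rewrite /= /big; apply/and4P; split => //; apply/ltP; lia. Qed.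
Lemma bgY s : all (big (2*s)) [:: 2*s+1; 2*s+2; 2*s+3].
Proof. rewrite /= /big; apply/and4P; split => //; apply/ltP; lia. Qed.
Lemma bgEX s (e : bool) : all (big (2*s)) (if e then [:: 2*s+2; 2*s+1; 2*s+3] else [:: 2*s+2]).
Proof. case: e; first exact: bgX. rewrite /= /big andbT; apply/ltP; lia. Qed.
Lemma bgEY s (e : bool) : all (big (2*s)) (if e then [:: 2*s+1; 2*s+2; 2*s+3] else [:: 2*s+1]).
Proof. case: e; first exact: bgY. rewrite /= /big andbT; apply/ltP; lia. Qed.

Lemma step (As Bs : seq (seq nat)) n :
  size As = n -> size Bs = n ->
  all (all (fun x => 0 < x)) As -> all (all (fun x => 0 < x)) Bs ->
  (forall i j, i < n -> j < n -> lcis (flatten (take i.+1 As)) (flatten (take j.+1 Bs)) = i + j + n) ->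
  forall (s : nat), s = foldr maxn 0 (flatten As ++ flatten Bs) ->
  forall i j (e d : bool), i < n -> j < n ->
  lcis (flatten (take (e + 2*i).+1 (nextA s As))) (flatten (take (d + 2*j).+1 (nextB s Bs)))
    = (e + 2*i) + (d + 2*j) + 2 * n.
Proof.
move=> hA hB pA pB IH s es i j e d hi hj.
have bA : forall a x, a \in As -> x \in a -> x <= s.
  move=> a x aA xa; rewrite es; apply: le_foldr_max; rewrite mem_cat; apply/orP; left.
  by apply/flattenP; exists a.
have bB : forall a x, a \in Bs -> x \in a -> x <= s.
  move=> a x aA xa; rewrite es; apply: le_foldr_max; rewrite mem_cat; apply/orP; right.
  by apply/flattenP; exists a.
have smI : forall a, (forall x, x \in a -> x <= s) -> all (small (2*s)) (inflate a).
  move=> a ha; apply/allP => x /mem_inflate [b bIn [->|->]]; have := ha b bIn; rewrite /small; lia.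
have iA : i < size As by rewrite hA.
have jB : j < size Bs by rewrite hB.
rewrite prefX // prefY //.
apply: lcis_eq.
- move=> V /and3P [VX VY HV].
  rewrite (split_sorted (2*s) HV) in VX VY *.
  have HZs := filter_all (small (2*s)) V.
  have HZb := filter_all (big (2*s)) V.
  have smgA : all (all (small (2*s))) (map inflate (take i As)).
    by apply/allP => h /mapP [a /mem_take aA ->]; apply: smI => x; apply: bA.
  have smgB : all (all (small (2*s))) (map inflate (take j Bs)).
    by apply/allP => h /mapP [a /mem_take aA ->]; apply: smI => x; apply: bB.
  have smA : all (small (2*s)) (inflate (nth [::] As i)).
    by apply: smI => x; apply: bA; apply: mem_nth.
  have smB : all (small (2*s)) (inflate (nth [::] Bs j)).
    by apply: smI => x; apply: bB; apply: mem_nth.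
  have bX := bgX s; have bY := bgY s; have bEX := bgEX s e; have bEY := bgEY s d.
  have [t [ht H1 H2]] := structG smgA smA bX bEX HZs HZb VX.
  have [u [hu H3 H4]] := structG smgB smB bY bEY HZs HZb VY.
  rewrite size_map size_takel in ht H2; last exact: ltnW.
  rewrite size_map size_takel in hu H4; last exact: ltnW.
  rewrite infl_prefix // in H1; rewrite infl_prefix // in H3.
  have pZs := pairwise_filter (small (2*s)) HV.
  have pZb := pairwise_filter (big (2*s)) HV.
  have bs := inflate_bound pZs H1 H3.
  rewrite (IH t u (leq_ltn_trans ht hi) (leq_ltn_trans hu hj)) in bs.
  have bt := tail_bound pZb H2 H4.
  rewrite size_cat; move: bs bt ht hu hi hj; clear.
  move: (size (filter (small (2*s)) V)) (size (filter (big (2*s)) V)) => z1 z2.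
  case: e; case: d => /=; lia.
- have [W /and3P [WA WB HW] sW] := lcis_wit (flatten (take i.+1 As)) (flatten (take j.+1 Bs)).
  rewrite IH // in sW.
  have Wprop : forall x, x \in W -> 0 < x /\ x <= s.
    move=> x /(mem_subseq WA) /flattenP [a /mem_take aA xa].
    by split; [exact: (allP (allP pA a aA) x xa) | exact: bA xa].
  have [T1 T2 T3 T4 T5] := Tl_props s e d.
  exists (inflate W ++ Tl s e d).
    rewrite /ci; apply/and3P; split.
    + rewrite /Xs catA; apply: cat_subseq => //.
      apply: (@subseq_trans _ (inflate (flatten (take i.+1 As)))); first exact: subseq_inflate.
      rewrite -(infl_prefix (leqnn i) iA) take_oversize; last by rewrite size_rcons size_map size_takel // ltnW.
      by rewrite flatten_rcons sub_flat.
    + rewrite /Xs catA; apply: cat_subseq => //.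
      apply: (@subseq_trans _ (inflate (flatten (take j.+1 Bs)))); first exact: subseq_inflate.
      rewrite -(infl_prefix (leqnn j) jB) take_oversize; last by rewrite size_rcons size_map size_takel // ltnW.
      by rewrite flatten_rcons sub_flat.
    + rewrite pairwise_cat T3 pairwise_inflate ?andbT //; last first.
        by apply/allP => x /Wprop [].
      apply/allrelP => x y /mem_inflate [b /Wprop [b0 bs] hx] /(allP T4) /= hy.
      by move: hx hy bs; clear; case=> ->; lia.
  rewrite size_cat size_inflate sW T5; move: hi hj; clear; case: e; case: d => /=; lia.
Qed.


Lemma seps_step k : seps k.+1 =
  (nextA (foldr maxn 0 (flatten (seps k).1 ++ flatten (seps k).2)) (seps k).1,
   nextB (foldr maxn 0 (flatten (seps k).1 ++ flatten (seps k).2)) (seps k).2).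
Proof. by rewrite /=; case: (seps k). Qed.

Lemma size_nextA s As : size (nextA s As) = 2 * size As.
Proof. by elim: As => [|a As IH] //=; rewrite /nextA /= -/(nextA s As) IH; lia. Qed.

Lemma size_nextB s As : size (nextB s As) = 2 * size As.
Proof. by elim: As => [|a As IH] //=; rewrite /nextB /= -/(nextB s As) IH; lia. Qed.

Lemma pos_inflate a : all (fun x => 0 < x) a -> all (fun x => 0 < x) (inflate a).
Proof.
move=> H; apply/allP => x /mem_inflate [b bA hx]; have := allP H b bA; move: hx; clear.
by case=> -> /=; lia.
Qed.

Lemma pos_nextA s As : all (all (fun x => 0 < x)) As -> all (all (fun x => 0 < x)) (nextA s As).
Proof.
elim: As => [|a As IH] //= /andP [Ha HAs]; rewrite /nextA /= -/(nextA s As) IH // andbT.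
by rewrite all_cat pos_inflate //= !addnS.
Qed.

Lemma pos_nextB s As : all (all (fun x => 0 < x)) As -> all (all (fun x => 0 < x)) (nextB s As).
Proof.
elim: As => [|a As IH] //= /andP [Ha HAs]; rewrite /nextB /= -/(nextB s As) IH // andbT.
by rewrite all_cat pos_inflate //= !addnS.
Qed.

Lemma main k : [/\ size (seps k).1 = 2^k, size (seps k).2 = 2^k,
  all (all (fun x => 0 < x)) (seps k).1, all (all (fun x => 0 < x)) (seps k).2 &
  forall i j, i < 2^k -> j < 2^k ->
    lcis (flatten (take i.+1 (seps k).1)) (flatten (take j.+1 (seps k).2)) = i + j + 2^k].
Proof.
elim: k => [|k [hA hB pA pB IH]].
  split => // [] [|i] [|j] // _ _ /=.
  apply: lcis_eq => [V /and3P [HV _ _]|]; first exact: size_subseq HV.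
  by exists [:: 1].
rewrite seps_step /=.
set s := foldr maxn 0 _.
split.
- by rewrite size_nextA hA expnS.
- by rewrite size_nextB hB expnS.
- exact: pos_nextA.
- exact: pos_nextB.
move=> i j hi hj.
have hi' : i./2 < 2^k by rewrite ltn_half_double -mul2n -expnS.
have hj' : j./2 < 2^k by rewrite ltn_half_double -mul2n -expnS.
rewrite -[i]odd_double_half -[j]odd_double_half -!mul2n expnS.
exact: (step hA hB pA pB IH (erefl s)).
Qed.

Theorem lemma11 (k i j : nat) :
  i < 2 ^ k -> j < 2 ^ k ->
  lcis (alpha_prefix k i) (beta_prefix k j) = i + j + 2 ^ k.
Proof.
have [hA hB _ _ IH] := main k.
move=> hi hj; rewrite /alpha_prefix /beta_prefix /alpha /beta !map_nth_iota0 ?hA ?hB //.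
exact: IH.
Qed.
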